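(* Let $B$ be an $(n,k)$-blocker of a convex $n$-gon with vertices $0,\dots,n-1$ (indices mod $n$). If a vertex $i$ is incident to exactly one edge of $B$, namely $(i,j)$, then $B$ contains the ear-cover $(j-1,j+1)$.
   Context: An edge $(i,j)$ is the segment between vertices $i,j$; boundary edges are $(i,i+1)$, diagonals are the other edges. Two edges cross if they share an interior point. A triangulation is a maximal set of pairwise non-crossing diagonals. A blocker is a set $B$ of diagonals having a diagonal in common with every triangulation; it is saturated if for every $e\in B$, $B\setminus\{e\}$ is not a blocker. An $(n,k)$-blocker is a saturated blocker of size $k$. The diagonal $(j-1,j+1)$ is called an ear-cover (it covers $j$). *)

(* Defs.v *)
From mathcomp Require Import all_boot.
Set Implicit Arguments. Unset Strict Implicit. Unset Printing Implicit Defensive.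

(* Convex n-gon with vertices 'I_n (indices mod n).  An edge {a,b} is encoded
   as the normalized ordered pair (min a b, max a b). *)

Definition edge n := ('I_n * 'I_n)%type.

Definition mkedge n (a b : 'I_n) : edge n :=
  if (a < b)%N then (a, b) else (b, a).

(* e = (a,b) with a < b is a diagonal: not a boundary edge (i,i+1 mod n) *)
Definition is_diag n (e : edge n) : bool :=
  [&& (e.1 < e.2)%N, e.2 != e.1.+1 :> nat & ~~ ((e.1 == 0 :> nat) && (e.2 == n.-1 :> nat))].

(* two diagonals of a convex polygon share an interior point iff their
   endpoints strictly interleave *)
Definition cross n (e f : edge n) : bool :=
  ((e.1 < f.1 < e.2)%N && (e.2 < f.2)%N) || ((f.1 < e.1 < f.2)%N && (f.2 < e.2)%N).

Definition diag_set n (S : {set edge n}) : bool := [forall e in S, is_diag e].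

Definition triangulation n (T : {set edge n}) : bool :=
  [&& diag_set T,
      [forall e in T, forall f in T, ~~ cross e f] &
      [forall e, (is_diag e && (e \notin T)) ==> [exists f in T, cross e f]]].

Definition blocker n (B : {set edge n}) : bool :=
  diag_set B && [forall T : {set edge n}, triangulation T ==> (B :&: T != set0)].

Definition saturated n (B : {set edge n}) : bool :=
  [forall e in B, ~~ blocker (B :\ e)].

Definition nk_blocker n (k : nat) (B : {set edge n}) : bool :=
  [&& blocker B, saturated B & #|B| == k].

Definition incident n (i : 'I_n) (e : edge n) : bool := (e.1 == i) || (e.2 == i).

Definition ear_cover n (j : 'I_n) : edge n := mkedge (ord_pred j) (ordS j).

(* Main.v *)
Require Import Defs.
From mathcomp Require Import all_boot zify.
Set Implicit Arguments. Unset Strict Implicit.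

Lemma ordS_val n (j : 'I_n) :
  ((ordS j : nat) = j.+1 /\ j.+1 < n) \/ ((ordS j : nat) = 0 /\ j.+1 = n).
Proof.
rewrite /ordS /=. have := ltn_ord j. rewrite leq_eqVlt => /orP[/eqP E|H].
  by right; rewrite E modnn.
by left; rewrite modn_small.
Qed.

Lemma ord_pred_val n (j : 'I_n) :
  ((ord_pred j : nat) = j.-1 /\ 0 < j) \/ ((ord_pred j : nat) = n.-1 /\ j = 0 :> nat).
Proof.
rewrite /ord_pred /=. have := ltn_ord j. case: (posnP j) => [E|P] L.
  right; rewrite E add0n modn_small //; lia.
left; split => //. have -> : (j + n).-1 = j.-1 + n by lia.
rewrite modnDr modn_small //; lia.
Qed.

Lemma mk1 n (a b : 'I_n) : ((mkedge a b).1 : nat) = minn a b.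
Proof. rewrite /mkedge; case: ifP => /= H; lia. Qed.
Lemma mk2 n (a b : 'I_n) : ((mkedge a b).2 : nat) = maxn a b.
Proof. rewrite /mkedge; case: ifP => /= H; lia. Qed.

Lemma edge_eq n (e f : edge n) : (e.1 : nat) = f.1 -> (e.2 : nat) = f.2 -> e = f.
Proof. by case: e f => [a b][c d] /= /val_inj -> /val_inj ->. Qed.

Lemma crossC n (e f : edge n) : cross e f = cross f e.
Proof. by rewrite /cross orbC. Qed.

Lemma cross_diag n (e f : edge n) : cross e f -> is_diag f.
Proof.
have := ltn_ord e.2; have := ltn_ord f.2.
rewrite /cross /is_diag => ? ? H; apply/and3P; split; lia.
Qed.
Lemma ordeq n (a b : 'I_n) : (a == b) = (nat_of_ord a == nat_of_ord b).
Proof. by []. Qed.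

Ltac prep := repeat match goal with
 | |- context [ (mkedge ?a ?b).1 ] => rewrite (mk1 a b)
 | |- context [ (mkedge ?a ?b).2 ] => rewrite (mk2 a b)
 | H : context [ (mkedge ?a ?b).1 ] |- _ => rewrite (mk1 a b) in H
 | H : context [ (mkedge ?a ?b).2 ] |- _ => rewrite (mk2 a b) in H
 end.

Lemma ear1 n (j : 'I_n) : ((ear_cover j).1 : nat) = minn (ord_pred j) (ordS j).
Proof. exact: mk1. Qed.
Lemma ear2 n (j : 'I_n) : ((ear_cover j).2 : nat) = maxn (ord_pred j) (ordS j).
Proof. exact: mk2. Qed.

Ltac ordb x := have := ltn_ord x.
Ltac earv j := rewrite ?ear1 ?ear2; have := ordS_val j; have := ord_pred_val j; ordb j.

Lemma diag_n4 n (e : edge n) : is_diag e -> 4 <= n.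
Proof. rewrite /is_diag; ordb e.2; ordb e.1; move=> ? ? /and3P[]; lia. Qed.

Lemma ear_diag n (j : 'I_n) : 4 <= n -> is_diag (ear_cover j).
Proof. rewrite /is_diag; earv j => ? ? ? ?; apply/and3P; split; lia. Qed.

Lemma ear_cross n (j : 'I_n) (g : edge n) : cross (ear_cover j) g -> incident j g.
Proof.
rewrite /cross /incident !ordeq; ordb g.1; ordb g.2; earv j. lia.
Qed.

Lemma inc_cross n (j : 'I_n) (e : edge n) : is_diag e -> incident j e -> cross e (ear_cover j).
Proof.
rewrite /cross /incident /is_diag !ordeq; ordb e.1; ordb e.2; earv j. lia.
Qed.

Lemma bd_nocross n (j : 'I_n) (g : edge n) :
  ~~ cross g (mkedge j (ordS j)) && ~~ cross g (mkedge j (ord_pred j)).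
Proof.
rewrite /cross; prep; ordb g.1; ordb g.2; have := ordS_val j; have := ord_pred_val j; ordb j. lia.
Qed.

Lemma shared_nocross n (i x y : 'I_n) : ~~ cross (mkedge i x) (mkedge i y).
Proof. rewrite /cross; prep; lia. Qed.

Lemma three n (i j x : 'I_n) (g : edge n) :
  ~~ incident j g -> cross g (mkedge i x) -> cross g (mkedge i j) || cross g (mkedge j x).
Proof. rewrite /cross /incident !ordeq; prep. lia. Qed.

Lemma ear_vals n (j : 'I_n) : 3 <= n ->
  [/\ (ord_pred j : nat) = j.-1, (ordS j : nat) = j.+1, ((ear_cover j).1 : nat) = j.-1 , ((ear_cover j).2 : nat) = j.+1 & 0 < j < n.-1]
  \/ [/\ (ord_pred j : nat) = n.-1, (ordS j : nat) = 1, ((ear_cover j).1 : nat) = 1 , ((ear_cover j).2 : nat) = n.-1 & j = 0 :> nat]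
  \/ [/\ (ord_pred j : nat) = n.-2, (ordS j : nat) = 0, ((ear_cover j).1 : nat) = 0 , ((ear_cover j).2 : nat) = n.-2 & j = n.-1 :> nat].
Proof.
move=> n3; rewrite ear1 ear2.
have := ordS_val j; have := ord_pred_val j; ordb j => ? [[A B]|[A B]] [[C D]|[C D]]; rewrite A C.
- left; split; lia.
- right; right; split; lia.
- right; left; split; lia.
- lia.
Qed.

Lemma sep_cross n (i x : 'I_n) (e : edge n) :
  ~~ incident i e -> ~~ incident x e ->
  (e.1 < i < e.2) != (e.1 < x < e.2) -> cross e (mkedge i x).
Proof. rewrite /cross /incident !ordeq; prep. lia. Qed.

Lemma cross_sep n (j y : 'I_n) (e : edge n) : cross e (mkedge j y) ->
  [&& ~~ incident j e, ~~ incident y e & (e.1 < j < e.2) != (e.1 < y < e.2)].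
Proof. rewrite /cross /incident !ordeq; prep. lia. Qed.

Lemma case1 n (j : 'I_n) (e : edge n) : 3 <= n -> is_diag e -> ~~ incident j e ->
  [|| ~~ incident (ord_pred j) e && ((e.1 < ord_pred j < e.2) == (e.1 < j < e.2)),
      ~~ incident (ordS j) e && ((e.1 < ordS j < e.2) == (e.1 < j < e.2)) |
    ((e.1 == (ear_cover j).1 :> nat) && (e.2 == (ear_cover j).2 :> nat))].
Proof.
move=> n3; rewrite /incident /is_diag !ordeq; ordb e.1; ordb e.2.
case: (ear_vals j n3) => [[-> -> -> -> ?]|[[-> -> -> -> ?]|[-> -> -> -> ?]]]; lia.
Qed.

Lemma ear_noinc n (j : 'I_n) : 3 <= n -> ~~ incident j (ear_cover j).
Proof.
move=> n3; rewrite /incident !ordeq.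
case: (ear_vals j n3) => [[_ _ -> -> ?]|[[_ _ -> -> ?]|[_ _ -> -> ?]]]; lia.
Qed.

Lemma inc_mk n (j a b : 'I_n) : incident j (mkedge a b) = (a == j) || (b == j).
Proof. by rewrite /mkedge; case: ifP => _ //=; rewrite /incident orbC. Qed.

Lemma pred_neq n (j : 'I_n) : 3 <= n -> (ord_pred j != j) && (ordS j != j).
Proof. move=> n3; rewrite !ordeq; case: (ear_vals j n3) => [[-> -> _ _ ?]|[[-> -> _ _ ?]|[-> -> _ _ ?]]]; lia. Qed.

Lemma mk_norm n (j : 'I_n) (f : edge n) : is_diag f -> incident j f ->
  f = mkedge j (if f.1 == j then f.2 else f.1).
Proof.
rewrite /is_diag /incident => /and3P[lt _ _] /orP[/eqP E|/eqP E].
  by rewrite E eqxx /mkedge -E lt; case: f {E lt}.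
case: eqP => [E'|_]; first by move: lt; rewrite E E' ltnn.
by rewrite /mkedge -E ltnNge ltnW //; case: f {E lt}.
Qed.

Definition ncr n (X : {set edge n}) := [forall e in X, forall f in X, ~~ cross e f].

Lemma extend n (S : {set edge n}) : diag_set S -> ncr S ->
  exists T, triangulation T && (S \subset T).
Proof.
move=> dS nS.
pose P := fun X : {set edge n} => [&& S \subset X, diag_set X & ncr X].
have PS : P S by rewrite /P subxx dS nS.
case: (@arg_maxnP _ S P (fun X => #|X|) PS) => T /and3P[ST dT nT] Tmax.
exists T; rewrite ST andbT /triangulation dT /=; apply/andP; split; first exact: nT.
apply/forallP => e; apply/implyP => /andP[de eT].
apply: negbNE; rewrite negb_exists; apply/negP => /forallP H.
have : P (e |: T).
  rewrite /P; apply/and3P; split.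
  - by apply: subset_trans ST (subsetUr _ _).
  - apply/forall_inP => f; rewrite in_setU1 => /orP[/eqP->//|fT].
    by move/forall_inP: dT; apply.
  - have ee : ~~ cross e e by rewrite /cross; lia.
    apply/forall_inP => f; rewrite in_setU1 => fX; apply/forall_inP => g; rewrite in_setU1 => gX.
    case/orP: fX => [/eqP->|fT]; case/orP: gX => [/eqP->|gT] //.
    + by have := H g; rewrite gT.
    + by have := H f; rewrite fT crossC.
    + by move/forall_inP: nT => /(_ f fT)/forall_inP/(_ g gT).
move/Tmax; rewrite cardsU1 eT /=; lia.
Qed.
Unset Implicit Arguments.

Theorem mainTheorem10 (n k : nat) (B : {set edge n}) (i j : 'I_n) :
  (3 <= n)%N ->
  nk_blocker k B ->
  mkedge i j \in B ->
  (forall e, e \in B -> incident i e -> e = mkedge i j) ->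
  ear_cover j \in B.
Proof.
move=> n3 /and3P[bB satB _] ijB Hinc.
have dB : diag_set B by case/andP: bB.
have dij : is_diag (mkedge i j) by move/forall_inP: dB; apply.
have n4 := diag_n4 dij.
have ij : i != j.
  by apply/eqP => E; move: dij; rewrite E /is_diag /mkedge ltnn /= ltnn.
have nincj : ~~ incident j (mkedge i j) = false by rewrite inc_mk eqxx orbT.
have [T triT TB] : exists2 T, triangulation T & forall e, e \in B -> e \in T -> e = mkedge i j.
  move/forall_inP: satB => /(_ _ ijB).
  rewrite /blocker negb_and.
  have -> : diag_set (B :\ mkedge i j).
    by apply/forall_inP => e /setD1P[_ eB]; move/forall_inP: dB; apply.
  rewrite /= negb_forall => /existsP[T]; rewrite negb_imply negbK => /andP[triT /eqP E].
  exists T => // e eB eT; apply/eqP; apply/idPn => ne.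
  have : e \in (B :\ mkedge i j) :&: T by rewrite !inE ne eB eT.
  by rewrite E inE.
have ijT : mkedge i j \in T.
  case/andP: bB => _ /forallP/(_ T); rewrite triT /= => /set0Pn[e].
  by rewrite inE => /andP[eB eT]; rewrite -(TB e eB eT).
case/and3P: triT => dT nT mT.
have nT' : forall f g, f \in T -> g \in T -> ~~ cross f g.
  by move=> f g fT gT; move/forall_inP: nT => /(_ f fT)/forall_inP/(_ g gT).
pose S0 := [set g in T | ~~ incident j g].
pose F := [set g : edge n | [exists x : 'I_n, [&& g == mkedge i x, x != j, is_diag g &
             [|| mkedge j x \in T, x == ord_pred j | x == ordS j]]]].
pose S := ear_cover j |: (S0 :|: F).
have dS : diag_set S.
  apply/forall_inP => g; rewrite !inE => /orP[/eqP->|/orP[/andP[gT _]|/existsP[x /and4P[_ _ d _]]]] //.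
  - exact: ear_diag.
  - by move/forall_inP: dT; apply.
have Fi : forall g, g \in F -> exists x, [/\ g = mkedge i x, x != j &
             [|| mkedge j x \in T, x == ord_pred j | x == ordS j]].
  by move=> g; rewrite inE => /existsP[x /and4P[/eqP -> xj _ H]]; exists x.
have earS0 : forall g, g \in S0 -> ~~ cross (ear_cover j) g.
  move=> g; rewrite inE => /andP[_ ng]; apply/negP => /ear_cross; exact/negP.
have earF : forall g, g \in F -> ~~ cross (ear_cover j) g.
  move=> g /Fi[x [-> xj _]]; apply/negP => /ear_cross.
  by rewrite inc_mk (negbTE ij) (negbTE xj).
have S0F : forall g f, g \in S0 -> f \in F -> ~~ cross g f.
  move=> g f; rewrite inE => /andP[gT ng] /Fi[x [-> xj H]]; apply/negP => /(three ng).
  case/orP => [|c]; first by apply/negP; apply: nT'.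
  case/or3P: H => [xT|/eqP xp|/eqP xs].
  - by move: c; apply/negP; apply: nT'.
  - by move: c; rewrite xp; apply/negP; case/andP: (bd_nocross j g).
  - by move: c; rewrite xs; apply/negP; case/andP: (bd_nocross j g).
have nS : ncr S.
  apply/forall_inP => f fS; apply/forall_inP => g gS.
  move: fS gS; rewrite /S !in_setU1 !in_setU => /orP[/eqP->|/orP[fS0|fF]] /orP[/eqP->|/orP[gS0|gF]].
  - by apply/negP => /ear_cross; apply/negP; apply: ear_noinc.
  - exact: earS0.
  - exact: earF.
  - by rewrite crossC; apply: earS0.
  - by move: fS0 gS0; rewrite !inE => /andP[? _] /andP[? _]; apply: nT'.
  - exact: S0F.
  - by rewrite crossC; apply: earF.
  - by rewrite crossC; apply: S0F.
  - by case/Fi: fF => [x [-> _ _]]; case/Fi: gF => [y [-> _ _]]; apply: shared_nocross.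
have [T' /andP[triT' ST']] := extend dS nS.
have inT' : forall g, g \in S -> g \in T' by move=> g; apply/subsetP.
case/andP: bB => _ /forallP/(_ T'); rewrite triT' /= => /set0Pn[e].
rewrite inE => /andP[eB eT'].
case/and3P: triT' => _ nT2 _.
have nT2' : forall f g, f \in T' -> g \in T' -> ~~ cross f g.
  by move=> f g fT gT; move/forall_inP: nT2 => /(_ f fT)/forall_inP/(_ g gT).
have de : is_diag e by move/forall_inP: dB; apply.
have earT' : ear_cover j \in T' by apply: inT'; rewrite !inE eqxx.
have FT' : forall x, x != j -> is_diag (mkedge i x) ->
    [|| mkedge j x \in T, x == ord_pred j | x == ordS j] -> mkedge i x \in T'.
  move=> x xj d H; apply: inT'; rewrite !inE; apply/orP; right; apply/orP; right.
  by apply/existsP; exists x; rewrite eqxx xj d H.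
have nje : ~~ incident j e.
  apply/negP => inc; have := nT2' _ _ eT' earT'; by rewrite (inc_cross de inc).
have nie : ~~ incident i e.
  apply/negP => /(Hinc e eB) E; move: nje; rewrite E inc_mk eqxx orbT.
  done.
have [sd|sq] := boolP ((e.1 < i < e.2) != (e.1 < j < e.2)).
- case/or3P: (case1 n3 de nje) => [/andP[nx /eqP sx]|/andP[nx /eqP sx]|/andP[/eqP E1 /eqP E2]].
  + have c : cross e (mkedge i (ord_pred j)) by apply: sep_cross => //; rewrite sx.
    have : mkedge i (ord_pred j) \in T'.
      apply: FT'; [by case/andP: (pred_neq j n3) | exact: cross_diag c | by rewrite eqxx orbT].
    by move/(nT2' _ _ eT'); rewrite c.
  + have c : cross e (mkedge i (ordS j)) by apply: sep_cross => //; rewrite sx.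
    have : mkedge i (ordS j) \in T'.
      apply: FT'; [by case/andP: (pred_neq j n3) | exact: cross_diag c | by rewrite eqxx !orbT].
    by move/(nT2' _ _ eT'); rewrite c.
  + by rewrite -(edge_eq E1 E2).
- rewrite negbK in sq.
  have eT : e \notin T.
    by apply/negP => /(TB e eB) E; move: nje; rewrite E inc_mk eqxx orbT.
  move/forallP: mT => /(_ e); rewrite de eT /= => /existsP[f /andP[fT c]].
  have [fj|nfj] := boolP (incident j f); last first.
    have fT' : f \in T' by apply: inT'; rewrite /S !in_setU1 !in_setU inE fT nfj /= orbT.
    by have := nT2' _ _ eT' fT'; rewrite c.
  have df : is_diag f by move/forall_inP: dT; apply.
  have Ef := mk_norm df fj; set y := (if _ then _ else _) in Ef.
  rewrite Ef in c fT.
  case/and3P: (cross_sep c) => _ ny sjy.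
  have c2 : cross e (mkedge i y) by apply: sep_cross => //; rewrite (eqP sq).
  have : mkedge i y \in T'.
    apply: FT'; last by rewrite fT.
      by apply/eqP => E; move: sjy; rewrite E eqxx.
    exact: cross_diag c2.
  by move/(nT2' _ _ eT'); rewrite c2.
Qed.
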